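(* In the setting of the context, let $(\omega,u,p)\in W\times V\times Q$ solve the continuous problem and $(\omega_h,u_h,p_h)\in W_h\times V_h\times Q_h$ solve the discrete problem. Then \[ \|\mathrm{d}(\omega-\omega_h)\|_{L^2\Lambda^{n-1}}\le\inf_{\tau_h\in W_h}\|\mathrm{d}(\omega-\tau_h)\|_{L^2\Lambda^{n-1}},\qquad \|\mathrm{d}(u-u_h)\|_{L^2\Lambda^{n}}\le\inf_{v_h\in V_h}\|\mathrm{d}(u-v_h)\|_{L^2\Lambda^{n}}. \]
   Context: $\Omega\subset\mathbb{R}^n$, $n\ge2$, bounded contractible domain. $L^2\Lambda^k(\Omega)$: square-integrable differential $k$-forms with inner product $(a,b)_\Omega=\int_\Omega a\wedge\star b$; $H\Lambda^k(\Omega)=\{a\in L^2\Lambda^k:\mathrm{d}a\in L^2\Lambda^{k+1}\}$; $\mathrm{d}$ exterior derivative, $\mathrm{d}^*$ codifferential, $\mathrm{tr}$ boundary trace. The boundary $\Gamma=\partial\Omega$ is split twice into disjoint parts $\Gamma=\Gamma_\omega\cup\Gamma_t=\Gamma_n\cup\Gamma_\pi$; $\Gamma_1=\Gamma_t\cap\Gamma_n$, $\Gamma_2=\Gamma_t\cap\Gamma_\pi$, $\Gamma_4=\Gamma_\omega\cap\Gamma_\pi$. $W=\{\tau\in H\Lambda^{n-2}:\mathrm{tr}\,\tau=0\text{ on }\Gamma_\omega\}$; $V=\{v\in H\Lambda^{n-1}:\mathrm{tr}\,v=0\text{ on }\Gamma_n\}$ (modulo $\mathrm{d}^*$-free forms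 if $\Gamma_4\ne\emptyset$); $Q=L^2\Lambda^n$ (modulo constants if $\Gamma_\pi=\emptyset$). $\mathsf{a}(\tau,\kappa)=(\tau,\kappa)_\Omega$, $\mathsf{b}(v,q)=(\mathrm{d}v,q)_\Omega$, $\mathsf{c}(\tau,v)=(\mathrm{d}\tau,v)_\Omega$, $\mathsf{e}(v,w)=(\mathrm{d}v,\mathrm{d}w)_\Omega$; for data $f\in L^2\Lambda^{n-1}$, $g\in L^2\Lambda^n$, $u_{b,t}\in H^{1/2}\Lambda^{n-1}(\Gamma_t)$, $\Pi_b\in H^{1/2}\Lambda^n(\Gamma_\pi)$: $\mathsf{f}(v)=(v,f)_\Omega+\int_{\Gamma_2\cup\Gamma_4}\mathrm{tr}\,v\wedge\Pi_b$, $\mathsf{g}(q)=(q,g)_\Omega$, $\mathsf{h}(\tau)=-\int_{\Gamma_1\cup\Gamma_2}\mathrm{tr}\,\tau\wedge u_{b,t}$. Continuous problem: find $(\omega,u,p)\in W\times V\times Q$ with $\mathsf{a}(\tau,\omega)-\mathsf{c}(\tau,u)=\mathsf{h}(\tau)$ $\forall\tau\in W$, $\mathsf{e}(v,u)+\mathsf{c}(\omega,v)+\mathsf{b}(v,p)=\mathsf{f}(v)$ $\forall v\in V$, $\mathsf{b}(u,q)=\mathsf{g}(q)$ $\forall q\in Q$. Discrete spaces: finite-dimensional $W_h\subset W$, $V_h\subset V$, $Q_h\subset Q$ with $\mathrm{d}W_h\subset V_h$ and $\mathrm{d}V_h=Q_h$ (compatible spaces, e.g. the paper's mimetic spectral element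 spaces). The discrete problem is the same system posed on $W_h\times V_h\times Q_h$ with test functions in $W_h\times V_h\times Q_h$. *)

(* Defs.v *)
From HB Require Import structures.
From mathcomp Require Import all_boot all_order all_algebra.
From mathcomp Require Import all_classical reals.
Set Implicit Arguments. Unset Strict Implicit. Unset Printing Implicit Defensive.
Import Order.TTheory GRing.Theory Num.Theory.
Local Open Scope ring_scope.
Local Open Scope classical_set_scope.

Definition inner_product (R : realType) (E : lmodType R) (ip : E -> E -> R) :=
  [/\ forall x y, ip x y = ip y x,
      forall a x y z, ip (a *: x + y) z = a * ip x z + ip y z
    & forall x, x != 0 -> 0 < ip x x].

Definition ipnorm (R : realType) (E : lmodType R) (ip : E -> E -> R) (x : E) : R :=
  Num.sqrt (ip x x).

Definition subspace (R : realType) (E : lmodType R) (S : set E) :=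
  S 0 /\ forall (a : R) x y, S x -> S y -> S (a *: x + y).

Definition fin_dim (R : realType) (E : lmodType R) (S : set E) :=
  exists (m : nat) (b : 'I_m -> E),
    forall x, S x <-> exists c : 'I_m -> R, x = \sum_(i < m) c i *: b i.

(* The bilinear forms of the paper.
   E0 ~ H Lambda^{n-2}, E1 ~ H Lambda^{n-1}, E2 ~ L^2 Lambda^n,
   ip_k the L^2 inner products, d0, d1 the exterior derivatives. *)
Section Forms.
Variables (R : realType) (E0 E1 E2 : lmodType R).
Variables (ip0 : E0 -> E0 -> R) (ip1 : E1 -> E1 -> R) (ip2 : E2 -> E2 -> R).
Variables (d0 : E0 -> E1) (d1 : E1 -> E2).

Definition form_a (t k : E0) : R := ip0 t k.
Definition form_b (v : E1) (q : E2) : R := ip2 (d1 v) q.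
Definition form_c (t : E0) (v : E1) : R := ip1 (d0 t) v.
Definition form_e (v w : E1) : R := ip2 (d1 v) (d1 w).

Definition mixed_solution (W : set E0) (V : set E1) (Q : set E2)
    (f : E1 -> R) (g : E2 -> R) (h : E0 -> R) (om : E0) (u : E1) (p : E2) :=
  [/\ W om, V u & Q p] /\
  [/\ forall t, W t -> form_a t om - form_c t u = h t,
      forall v, V v -> form_e v u + form_c om v + form_b v p = f v
    & forall q, Q q -> form_b u q = g q].
End Forms.

(* Main.v *)
Require Import Defs.
From HB Require Import structures.
From mathcomp Require Import all_boot all_order all_algebra.
From mathcomp Require Import all_classical reals.
Import Order.TTheory GRing.Theory Num.Theory.
Local Open Scope ring_scope.
Local Open Scope classical_set_scope.

Set Implicit Arguments.
Section Aux.
Variables (R : realType) (E : lmodType R) (ip : E -> E -> R).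
Hypothesis hip : inner_product ip.

Lemma ipD x y z : ip (x + y) z = ip x z + ip y z.
Proof. by case: hip => _ L _; rewrite -[x]scale1r L mul1r scale1r. Qed.

Lemma ip0l z : ip 0 z = 0.
Proof. have := ipD 0 0 z; rewrite addr0 => /eqP.
by rewrite -subr_eq0 opprD addrA subrr add0r oppr_eq0 => /eqP. Qed.

Lemma ipN x z : ip (- x) z = - ip x z.
Proof. by apply/eqP; rewrite -subr_eq0 opprK -ipD addNr ip0l. Qed.

Lemma ipB x y z : ip (x - y) z = ip x z - ip y z.
Proof. by rewrite ipD ipN. Qed.

Lemma ipDr x y z : ip z (x + y) = ip z x + ip z y.
Proof. by case: hip => S _ _; rewrite !(S z) ipD. Qed.

Lemma ip_ge0 x : 0 <= ip x x.
Proof. case: hip => _ _ P; have [->|nz] := eqVneq x 0; first by rewrite ip0l.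
exact/ltW/P. Qed.

Lemma pyth a b : ip a b = 0 -> ipnorm ip a <= ipnorm ip (a + b).
Proof.
move=> ab; have ba : ip b a = 0 by case: hip => S _ _; rewrite S.
rewrite /ipnorm ler_sqrt; last first.
  by apply: le_trans (ip_ge0 a) _; rewrite ipD !ipDr ab ba
      !addr0 add0r lerDl ip_ge0.
by rewrite ipD !ipDr ab ba !addr0 add0r lerDl ip_ge0.
Qed.
End Aux.

Theorem proposition5p6 (R : realType) (E0 E1 E2 : lmodType R)
    (ip0 : E0 -> E0 -> R) (ip1 : E1 -> E1 -> R) (ip2 : E2 -> E2 -> R)
    (d0 : {linear E0 -> E1}) (d1 : {linear E1 -> E2})
    (W : set E0) (V : set E1) (Q : set E2)
    (Wh : set E0) (Vh : set E1) (Qh : set E2)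
    (f : E1 -> R) (g : E2 -> R) (h : E0 -> R)
    (om omh : E0) (u uh : E1) (p ph : E2) :
  inner_product ip0 -> inner_product ip1 -> inner_product ip2 ->
  (forall x, d1 (d0 x) = 0) ->
  subspace W -> subspace V -> subspace Q ->
  subspace Wh -> subspace Vh -> subspace Qh ->
  fin_dim Wh -> fin_dim Vh -> fin_dim Qh ->
  Wh `<=` W -> Vh `<=` V -> Qh `<=` Q ->
  d0 @` Wh `<=` Vh -> d1 @` Vh = Qh ->
  mixed_solution ip0 ip1 ip2 d0 d1 W V Q f g h om u p ->
  mixed_solution ip0 ip1 ip2 d0 d1 Wh Vh Qh f g h omh uh ph ->
  ipnorm ip1 (d0 (om - omh)) <= inf [set ipnorm ip1 (d0 (om - t)) | t in Wh] /\
  ipnorm ip2 (d1 (u - uh)) <= inf [set ipnorm ip2 (d1 (u - v)) | v in Vh].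
Proof.
move=> h0 h1 h2 dd sW sV sQ sWh sVh sQh _ _ _ WW VV QQ d0W d1V
  [[Wom Vu Qp] [_ E2c E3c]] [[Womh Vuh Qph] [_ E2d E3d]].
have subWh x y : Wh x -> Wh y -> Wh (x - y).
  move=> Hx Hy; have := sWh.2 (-1) y x Hy Hx.
  by rewrite scaleN1r addrC.
have subVh x y : Vh x -> Vh y -> Vh (x - y).
  move=> Hx Hy; have := sVh.2 (-1) y x Hy Hx.
  by rewrite scaleN1r addrC.
split.
- apply: lb_le_inf; first by exists (ipnorm ip1 (d0 (om - 0))), 0 => //; exact: sWh.1.
  move=> _ [t Ht <-].
  have -> : om - t = (om - omh) + (omh - t) by rewrite addrA subrK.
  rewrite (linearD d0 (om - omh)); apply: (pyth h1).
  have Vv : Vh (d0 (omh - t)) by apply: d0W; exists (omh - t) => //; exact: subWh.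
  have e1 := E2c _ (VV _ Vv); have e2 := E2d _ Vv.
  move: e1 e2; rewrite /form_e /form_c /form_b dd !ip0l // !add0r.
  move=> e1; rewrite -e1 => e2.
  by rewrite !addr0 in e2; rewrite linearB ipB ?e2 ?subrr.
- apply: lb_le_inf; first by exists (ipnorm ip2 (d1 (u - 0))), 0 => //; exact: sVh.1.
  move=> _ [v Hv <-].
  have -> : u - v = (u - uh) + (uh - v) by rewrite addrA subrK.
  rewrite (linearD d1 (u - uh)); apply: (pyth h2).
  have Qq : Qh (d1 (uh - v)) by rewrite -d1V; exists (uh - v) => //; exact: subVh.
  have e1 := E3c _ (QQ _ Qq); have e2 := E3d _ Qq.
  move: e1 e2; rewrite /form_b => e1; rewrite -e1 => e2.
  by rewrite linearB ipB ?e2 ?subrr //.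
Qed.
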